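(* For all integers $d\geq2$, $k\geq1$ and $j\in\{0,\dots,k-1\}$, \[ \frac{1}{(j+1)\prod_{\ell=1}^{k-j}\left(1+\frac{1}{d\ell}\right)}\leq k^{-1/d}. \] *)

(* Defs.v *)
From Stdlib Require Import Reals.
Open Scope R_scope.

Fixpoint prod_factor (d : nat) (m : nat) : R :=
  match m with
  | O => 1
  | S m' => prod_factor d m' * (1 + 1 / (INR d * INR (S m')))
  end.

(* Main.v *)
Require Import Defs.
From Stdlib Require Import Reals Lra Lia.
Open Scope R_scope.

Lemma bern (x : R) (n : nat) : 0 <= x -> 1 + INR n * x <= (1 + x) ^ n.
Proof.
  intro Hx; induction n as [|n IH]; cbn [pow]; [simpl; lra|].
  rewrite S_INR.
  assert (0 <= INR n) by apply pos_INR.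
  assert (0 <= INR n * x * x) by (apply Rmult_le_pos; [apply Rmult_le_pos|]; lra).
  apply Rle_trans with ((1 + x) * (1 + INR n * x)); [nra|].
  apply Rmult_le_compat_l; lra.
Qed.

Lemma pow_strict (a b : R) (n : nat) : 0 <= a < b -> a ^ (S n) < b ^ (S n).
Proof.
  intros H; induction n as [|n IH]; [simpl; lra|].
  change (a * a ^ (S n) < b * b ^ (S n)).
  assert (0 <= a ^ S n) by (apply pow_le; lra).
  nra.
Qed.

Lemma prod_pos d m : (1 <= d)%nat -> 0 < prod_factor d m.
Proof.
  intro Hd; induction m as [|m IH]; cbn [prod_factor]; [lra|].
  apply Rmult_lt_0_compat; auto.
  assert (0 < INR d * INR (S m)).
  { apply Rmult_lt_0_compat; apply lt_0_INR; lia. }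
  assert (0 < 1 / (INR d * INR (S m))) by (apply Rdiv_lt_0_compat; lra). lra.
Qed.

Lemma prod_pow d m : (1 <= d)%nat -> INR (m + 1) <= prod_factor d m ^ d.
Proof.
  intro Hd; induction m as [|m IH]; cbn [prod_factor].
  - simpl. rewrite pow1. lra.
  - rewrite Rpow_mult_distr.
    assert (Hdp : 0 < INR d) by (apply lt_0_INR; lia).
    assert (Hmp : 0 < INR (S m)) by (apply lt_0_INR; lia).
    assert (0 < INR d * INR (S m)) by (apply Rmult_lt_0_compat; lra).
    assert (Hb := bern (1 / (INR d * INR (S m))) d ltac:(apply Rlt_le, Rdiv_lt_0_compat; lra)).
    assert (E : 1 + INR d * (1 / (INR d * INR (S m))) = INR (S m + 1) / INR (S m)).
    { rewrite plus_INR. change (INR 1) with 1. field. split; lra. }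
    rewrite E in Hb.
    replace (INR (S m + 1)) with (INR (m + 1) * (INR (S m + 1) / INR (S m))).
    2:{ replace (INR (m+1)) with (INR (S m)) by (f_equal; lia). field. lra. }
    apply Rmult_le_compat; auto.
    + apply pos_INR.
    + apply Rlt_le, Rdiv_lt_0_compat; [apply lt_0_INR; lia| lra].
Qed.

Theorem lemma8p2 (d k j : nat) (hd : (2 <= d)%nat) (hk : (1 <= k)%nat)
  (hj : (j <= k - 1)%nat) :
  1 / (INR (j + 1) * prod_factor d (k - j)) <= Rpower (INR k) (- (1 / INR d)).
Proof.
  set (m := (k - j)%nat).
  set (P := prod_factor d m).
  assert (HP : 0 < P) by (apply prod_pos; lia).
  assert (HPd := prod_pow d m ltac:(lia)). fold P in HPd.
  assert (Hj : 1 <= INR (j + 1)) by (apply (le_INR 1); lia).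
  set (A := INR (j + 1) * P).
  assert (HA : 0 < A) by (unfold A; nra).
  assert (Hk : 0 < INR k) by (apply lt_0_INR; lia).
  assert (Hdp : 0 < INR d) by (apply lt_0_INR; lia).
  set (x := Rpower (INR k) (1 / INR d)).
  assert (Hx : 0 < x) by (unfold x, Rpower; apply exp_pos).
  assert (Hxd : x ^ d = INR k).
  { unfold x. rewrite <- Rpower_pow by (unfold Rpower; apply exp_pos).
    rewrite Rpower_mult. replace (1 / INR d * INR d) with 1 by (field; lra).
    apply Rpower_1; lra. }
  assert (HAd : INR k <= A ^ d).
  { unfold A. rewrite Rpow_mult_distr.
    assert (H1 : INR (j + 1) <= INR (j + 1) ^ d).
    { destruct d as [|d']; [lia|]. simpl.
      rewrite <- (Rmult_1_r (INR (j+1))) at 1.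
      apply Rmult_le_compat_l; [lra|]. apply pow_R1_Rle; lra. }
    assert (H2 : INR k <= INR (j + 1) * INR (m + 1)).
    { rewrite <- mult_INR. apply le_INR. unfold m. nia. }
    assert (0 <= INR (m + 1)) by apply pos_INR.
    apply Rle_trans with (INR (j + 1) * INR (m + 1)); auto.
    apply Rmult_le_compat; lra. }
  assert (HxA : x <= A).
  { destruct (Rle_or_lt x A) as [H|H]; auto.
    destruct d as [|d']; [lia|].
    pose proof (pow_strict A x d' ltac:(lra)). lra. }
  rewrite Rpower_Ropp. fold x.
  unfold Rdiv. rewrite Rmult_1_l. fold A.
  apply Rinv_le_contravar; lra.
Qed.
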